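(* Let $A=(a_{ij})_{i,j=1}^n$ be a (row) stochastic matrix, i.e. $a_{ij}\ge 0$ and $\sum_{j=1}^n a_{ij}=1$ for every $i$. Then \[ \operatorname{Per}(A)\ \le\ 2^n\cdot\prod_{i,j=1}^n (1-a_{ij})^{1-a_{ij}}. \]
   Context: $\operatorname{Per}(A)=\sum_{\sigma\in S_n}\prod_{i=1}^n a_{i\sigma(i)}$ is the permanent. Convention: $0^0=1$. *)

(* Defs.v *)
From Stdlib Require Import Reals.
From mathcomp Require Import all_boot all_fingroup.
Set Implicit Arguments.
Unset Strict Implicit.

Definition Rsum {T : Type} (s : seq T) (F : T -> R) : R :=
  foldr Rplus R0 (map F s).
Definition Rprod {T : Type} (s : seq T) (F : T -> R) : R :=
  foldr Rmult R1 (map F s).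

(* t^t with the convention 0^0 = 1 (only used for t >= 0) *)
Definition selfpow (t : R) : R :=
  if Req_EM_T t R0 then R1 else Rpower t t.

Definition Per (n : nat) (A : 'I_n -> 'I_n -> R) : R :=
  Rsum (enum 'S_n) (fun s : 'S_n => Rprod (enum 'I_n) (fun i => A i (s i))).

Definition row_stochastic (n : nat) (A : 'I_n -> 'I_n -> R) : Prop :=
  (forall i j, Rle R0 (A i j)) /\
  (forall i, Rsum (enum 'I_n) (fun j => A i j) = R1).

(* Main.v *)
Require Import Defs.
From Stdlib Require Import Reals Lra.
From mathcomp Require Import all_boot all_order all_fingroup all_algebra.
From mathcomp Require Import Rstruct.
Set Implicit Arguments. Unset Strict Implicit.

Section StdFacts.
Local Open Scope R_scope.

Lemma ln_le_sub1 v : 0 < v -> ln v <= v - 1.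
Proof.
move=> Hv. have H := exp_ineq1_le (v - 1).
rewrite -(exp_ln v Hv) in H |- *. rewrite ln_exp.
destruct (Rle_dec (ln v) (exp (ln v) - 1)) as [h|h]; first exact h.
exfalso. apply Rnot_le_lt in h.
have h2 : exp (exp (ln v) - 1) < exp (ln v) by apply exp_increasing.
lra.
Qed.

Lemma selfpow_ge0 t : 0 <= selfpow t.
Proof.
rewrite /selfpow; case: (Req_dec_T t R0) => /= => _ /=; first lra.
rewrite /Rpower; left; apply exp_pos.
Qed.

Lemma F1 a : 0 <= a <= 1 -> exp (- a) <= selfpow (1 - a).
Proof.
move=> Ha; rewrite /selfpow; case: (Req_dec_T (1 - a) R0) => /= Hu.
  have -> : a = 1 by lra.
  have := exp_increasing (-(1)) 0 ltac:(lra); rewrite exp_0; lra.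
have Hu0 : 0 < 1 - a by lra.
rewrite /Rpower.
have H := ln_le_sub1 (Rinv_0_lt_compat _ Hu0).
rewrite ln_Rinv // in H.
have E : (1 - a) * / (1 - a) = 1 by field; lra.
have H2 : - a <= (1 - a) * ln (1 - a).
  have := Rmult_le_compat_l (1 - a) _ _ (Rlt_le _ _ Hu0) H. nra.
destruct H2 as [H2|H2]; [left; apply exp_increasing; exact H2 | rewrite H2; lra].
Qed.

Lemma F2 t : 0 <= t <= 1 -> (2 - t) / 4 <= selfpow t * exp (- t).
Proof.
move=> Ht; rewrite /selfpow; case: (Req_dec_T t R0) => /= => Ht0.
  rewrite Ht0 Ropp_0 exp_0; lra.
have Htp : 0 < t by lra.
rewrite /Rpower -exp_plus.
have H2t : 0 < / (2 * t) by apply Rinv_0_lt_compat; lra.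
have H := ln_le_sub1 H2t.
rewrite ln_Rinv ?ln_mult in H; try lra.
have E : t * / (2 * t) = / 2 by field; lra.
have Hl2 := ln_lt_2.
have H3 : - t / 2 - ln 2 <= t * ln t + - t.
  have := Rmult_le_compat_l t _ _ (Rlt_le _ _ Htp) H. nra.
have H4 : exp (- t / 2 - ln 2) = exp (- t / 2) / 2.
  rewrite /Rminus exp_plus exp_Ropp exp_ln; [field | lra].
have H5 := exp_ineq1_le (- t / 2).
apply Rle_trans with (exp (- t / 2 - ln 2)).
  rewrite H4; lra.
destruct H3 as [H3|H3]; [left; apply exp_increasing; exact H3 | rewrite H3; lra].
Qed.

Lemma F2g t two four : two = 1 + 1 -> four = two + two -> 0 <= t <= 1 ->
  (two - t) / four <= selfpow t * exp (- t).
Proof.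
move=> -> -> Ht; have := F2 Ht.
have -> : 1 + 1 + (1 + 1) = 4 by lra.
by have -> : 1 + 1 = 2 by lra.
Qed.



End StdFacts.

Import Order.TTheory GRing.Theory Num.Theory.
Local Open Scope ring_scope.
From mathcomp Require Import ring lra.

Definition P n (A : 'I_n -> 'I_n -> R) : R := \sum_(s : 'S_n) \prod_(i < n) A i (s i).
Definition minor n (A : 'I_n.+1 -> 'I_n.+1 -> R) (i j : 'I_n.+1) : 'I_n -> 'I_n -> R :=
  fun a b => A (lift i a) (lift j b).

Lemma expand n (A : 'I_n.+1 -> 'I_n.+1 -> R) i0 :
  P A = \sum_j A i0 j * P (minor A i0 j).
Proof.
rewrite /P (partition_big (fun s : 'S_n.+1 => s i0) xpredT) //=.
apply: eq_bigr => j0 _.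
rewrite (reindex (lift_perm i0 j0)); last first.
  pose ulsf i (s : 'S_n.+1) k := odflt k (unlift (s i) (s (lift i k))).
  have ulsfK i (s : 'S_n.+1) k: lift (s i) (ulsf i s k) = s (lift i k).
    rewrite /ulsf; have:= neq_lift i k.
    by rewrite -(can_eq (permK s)) => /unlift_some[] ? ? ->.
  have inj_ulsf: injective (ulsf i0 _).
    move=> s; apply: can_inj (ulsf (s i0) s^-1%g) _ => k'.
    by rewrite {1}/ulsf ulsfK !permK liftK.
  exists (fun s => perm (inj_ulsf s)) => [s _ | s].
    by apply/permP=> k'; rewrite permE /ulsf lift_perm_lift lift_perm_id liftK.
  move/(s _ =P _) => si0; apply/permP=> k.
  case: (unliftP i0 k) => [k'|] ->; rewrite ?lift_perm_id //.
  by rewrite lift_perm_lift -si0 permE ulsfK.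
rewrite big_distrr /=.
apply: eq_big => [s | s _]; first by rewrite lift_perm_id eqxx.
rewrite (bigD1_ord i0) //= lift_perm_id; congr (_ * _).
by apply: eq_bigr => i _; rewrite lift_perm_lift.
Qed.

Lemma prod_notin (I : eqType) (r : seq I) a (F : I -> R) : a \notin r ->
  \prod_(l <- r | l != a) F l = \prod_(l <- r) F l.
Proof.
move=> Ha; rewrite -big_filter; congr bigop.
apply/all_filterP/allP => l Hl; apply/eqP => E; subst; by rewrite Hl in Ha.
Qed.

Lemma one_succ (I : eqType) (r : seq I) (y : I -> R) : uniq r ->
  (forall i, 0 <= y i <= 1/2) ->
  [/\ 0 <= \prod_(l <- r) (1 - y l),
   0 <= \sum_(i <- r) y i * \prod_(l <- r | l != i) (1 - y l),
   \prod_(l <- r)(1 - y l) + \sum_(i <- r) y i * \prod_(l <- r | l != i) (1 - y l) <= 1 &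
   \sum_(i <- r) y i * \prod_(l <- r | l != i) (1 - y l) <= 1/2].
Proof.
move=> Hu Hy; elim: r Hu => [|a r IH] /=.
  rewrite !big_nil; split; lra.
case/andP => Ha Hu; case: (IH Hu) => H0 H1 H2 H3.
have E : \sum_(i <- a :: r) y i * \prod_(l <- a :: r | l != i) (1 - y l) =
   y a * \prod_(l <- r)(1 - y l) + (1 - y a) * \sum_(i <- r) y i * \prod_(l <- r | l != i) (1 - y l).
  rewrite big_cons big_cons eqxx /= prod_notin //; congr (_ + _).
  rewrite big_distrr /= big_seq [RHS]big_seq; apply: eq_bigr => i Hi.
  rewrite big_cons.
  have -> : (a != i) by apply/eqP => E; subst; rewrite Hi in Ha.
  by rewrite mulrCA.
rewrite E big_cons.
move: (Hy a) => /andP [Ya1 Ya2].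
set E0 := \prod_(l <- r) (1 - y l) in H0 H1 H2 H3 *.
set E1 := \sum_(i <- r) _ in H0 H1 H2 H3 *.
split; nra.
Qed.

Lemma prod_neq_lift n (i : 'I_n.+1) (F : 'I_n.+1 -> R) :
  \prod_(l | l != i) F l = \prod_(l' < n) F (lift i l').
Proof.
rewrite big_mkcond (bigD1_ord i) //= eqxx mul1r.
by apply: eq_bigr => l' _; rewrite eq_sym neq_lift.
Qed.

Lemma P0 (A : 'I_0 -> 'I_0 -> R) : P A = 1.
Proof.
rewrite /P (eq_bigr (fun _ => 1)) => [|s _]; last by rewrite big_ord0.
by rewrite sumr_const card_Sn.
Qed.

Lemma lemA n : forall (A : 'I_n -> 'I_n -> R) (M : 'I_n -> R),
  (forall i k, 0 <= A i k) -> (forall i k, A i k <= M i) ->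
  P A <= \prod_i ((\sum_k A i k + M i) / 2).
Proof.
elim: n => [|n IH] A M A0 AM.
  by rewrite P0 big_ord0.
pose s i := \sum_k A i k.
pose c i := (s i + M i) / 2.
have s0 i : 0 <= s i by apply: sumr_ge0 => k _.
have M0 i : 0 <= M i := le_trans (A0 i i) (AM i i).
have c0 i : 0 <= c i by rewrite /c; have := s0 i; have := M0 i; lra.
have As i k : A i k <= s i.
  by rewrite /s (bigD1 k) //= lerDl sumr_ge0.
rewrite -/(c _).
have -> : \prod_i ((\sum_k A i k + M i) / 2) = \prod_i c i by [].
case: (boolP [exists i, s i == 0]) => [/existsP [i /eqP si0] | /existsPn sn0].
  have Ai0 k : A i k = 0.
    by apply: (psumr_eq0P (P := xpredT) (fun k _ => A0 i k) si0).
  rewrite (expand A i) big1 ?prodr_ge0 // => k _; by rewrite Ai0 mul0r.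
have spos i : 0 < s i by rewrite lt0r sn0 s0.
have dpos i : 0 < s i + M i by have := spos i; have := M0 i; lra.
have cpos i : 0 < c i by rewrite /c; have := dpos i; lra.
pose x l k := A l k / (s l + M l).
have xE l k : x l k * (s l + M l) = A l k.
  by rewrite /x divfK // gt_eqF.
have x0 l k : 0 <= x l k <= 1/2.
  apply/andP; split; first by rewrite /x divr_ge0 // ltW.
  rewrite /x ler_pdivrMr //.
  have := dpos l; have := As l k; have := AM l k; have := A0 l k.
  clear; move=> *; lra.
pose S i := \sum_k A i k * \prod_(l | l != i) (1 - x l k).
have [i Si] : exists i, S i <= c i.
  case: (boolP [exists i, S i <= c i]) => [/existsP //|/existsPn H].
  exfalso.
  have Hlt i : 1 < S i / c i.
    by rewrite ltr_pdivlMr // mul1r ltNge H.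
  have H1 : \sum_(i < n.+1) (1 : R) < \sum_i S i / c i.
    apply: ltr_sum => //; by apply/hasP; exists ord0; rewrite ?mem_index_enum.
  have H2 : \sum_i S i / c i =
     2 * \sum_k \sum_i x i k * \prod_(l | l != i) (1 - x l k).
    rewrite (exchange_big) big_distrr /=; apply: eq_bigr => i' _.
    rewrite /S big_distrl big_distrr /=; apply: eq_bigr => k _.
    rewrite -xE /c; field; by rewrite gt_eqF.
  have H3 : \sum_k \sum_i x i k * \prod_(l | l != i) (1 - x l k) <= \sum_(k < n.+1) 1/2.
    apply: ler_sum => k _.
    by case: (one_succ (y := fun l => x l k) (index_enum_uniq _) (fun l => x0 l k)).
  move: H1; rewrite H2; move: H3; rewrite !sumr_const card_ord => H3 H1.
  move: H1 H3.
  have E : 2 * ((1/2) *+ n.+1) = (n.+1)%:R :> R.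
    by rewrite mulrnAr; congr (_ *+ _); field.
  move: E; set N := (n.+1)%:R; set U := (1/2) *+ n.+1; set T := \sum_k _.
  clearbody N T U => E H1 H3; clear -E H1 H3; lra.
rewrite (expand A i).
apply: (le_trans (y := \sum_k A i k * \prod_(l' < n) (c (lift i l') * (1 - x (lift i l') k)))).
  apply: ler_sum => k _; apply: ler_wpM2l; first exact: A0.
  have H := IH (minor A i k) (fun l' => M (lift i l')) (fun a b => A0 _ _) (fun a b => AM _ _).
  apply: (le_trans H); rewrite le_eqVlt; apply/orP; left; apply/eqP.
  apply: eq_bigr => l' _.
  have -> : \sum_k' minor A i k l' k' = s (lift i l') - A (lift i l') k.
    by rewrite /s (bigD1_ord k) //= addrC addrK.
  rewrite /c /x; field; by rewrite gt_eqF.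
rewrite [X in _ <= X](bigD1_ord i) //=.
have -> : \sum_k A i k * \prod_(l' < n) (c (lift i l') * (1 - x (lift i l') k)) =
   (\prod_(l' < n) c (lift i l')) * S i.
  rewrite /S big_distrr /=; apply: eq_bigr => k _.
  by rewrite big_split /= prod_neq_lift mulrCA.
rewrite [X in _ <= X]mulrC; apply: ler_wpM2l => //.
  by apply: prodr_ge0 => l _.
Qed.

Lemma RsumE (T : Type) (s : seq T) F : Rsum s F = \sum_(x <- s) F x.
Proof. elim: s => [|x s IH]; first by rewrite big_nil. by rewrite big_cons -IH. Qed.
Lemma RprodE (T : Type) (s : seq T) F : Rprod s F = \prod_(x <- s) F x.
Proof. elim: s => [|x s IH]; first by rewrite big_nil. by rewrite big_cons -IH. Qed.

Lemma prod_exp (I : finType) (P : pred I) (f : I -> R) :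
  \prod_(i | P i) exp (f i) = exp (\sum_(i | P i) f i).
Proof.
elim/big_rec2: _ => [|i y1 y2 _ ->]; first by rewrite exp_0.
by rewrite exp_plus.
Qed.

Lemma rowB n (a : 'I_n -> R) j : (forall k, 0 <= a k) -> \sum_k a k = 1 ->
  (forall k, a k <= a j) ->
  (1 + a j) / 2 <= 2 * \prod_k selfpow (1 - a k).
Proof.
move=> a0 asum amax.
have a1 k : a k <= 1 by rewrite -asum (bigD1 k) //= lerDl sumr_ge0.
have H1 : \prod_(k | k != j) exp (- a k) <= \prod_(k | k != j) selfpow (1 - a k).
  apply: ler_prod => k _; apply/andP; split; first by apply/RleP; left; apply: exp_pos.
  apply/RleP; apply: F1; split; apply/RleP; [exact: a0 | exact: a1].
rewrite prod_exp sumrN in H1.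
have E : \sum_(k | k != j) a k = 1 - a j by apply/eqP; rewrite eq_sym subr_eq -asum (bigD1 j) //= addrC.
rewrite E in H1.
have H3 : (2 - (1 - a j)) / 4 <= selfpow (1 - a j) * exp (- (1 - a j)).
  apply/RleP; apply: (F2g (t := 1 - a j) (two := 2%:R) (four := 4%:R)).
  - exact: (mulr2n 1).
  - exact: (natrD R 2 2).
  - have h1 : 0 <= 1 - a j by have := a1 j; lra.
    have h2 : 1 - a j <= 1 by have := a0 j; lra.
    by split; apply/RleP.
rewrite (bigD1 j) //=.
have := selfpow_ge0 (1 - a j) => /RleP Hs.
have H4 : selfpow (1 - a j) * exp (- (1 - a j)) <=
          selfpow (1 - a j) * \prod_(k | k != j) selfpow (1 - a k).
  by apply: ler_wpM2l.
have H5 : (1 + a j) / 2 = 2 * ((2 - (1 - a j)) / 4) by field.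
rewrite H5; apply: ler_wpM2l; first lra.
exact: (le_trans H3 H4).
Qed.

Lemma two : IZR 2 = 2.
Proof. reflexivity. Qed.
Lemma pow2E n : pow (IZR 2) n = 2 ^+ n.
Proof. elim: n => [|n IH] //=. by rewrite IH exprS two. Qed.

Lemma enum_sum (T : finType) (F : T -> R) : \sum_(x <- enum T) F x = \sum_x F x.
Proof. by rewrite big_enum. Qed.
Lemma enum_prod (T : finType) (F : T -> R) : \prod_(x <- enum T) F x = \prod_x F x.
Proof. by rewrite big_enum. Qed.

Theorem theorem1p3 (n : nat) (A : 'I_n -> 'I_n -> R) :
  row_stochastic A ->
  Rle (Per A)
      (Rmult (pow (IZR 2) n)
         (Rprod (enum 'I_n)
            (fun i => Rprod (enum 'I_n) (fun j => selfpow (Rminus R1 (A i j)))))).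
Proof.
case=> A0 Asum.
have A0' i k : 0 <= A i k by apply/RleP; apply: A0.
have Asum' i : \sum_k A i k = 1.
  by have := Asum i; rewrite RsumE enum_sum.
apply/RleP.
have EP : Per A = P A.
  rewrite /Per /P RsumE enum_sum; apply: eq_bigr => s _; by rewrite RprodE enum_prod.
have EQ : Rprod (enum 'I_n) (fun i => Rprod (enum 'I_n) (fun j => selfpow (Rminus R1 (A i j))))
   = \prod_i \prod_j selfpow (1 - A i j).
  rewrite RprodE enum_prod; apply: eq_bigr => i _; by rewrite RprodE enum_prod.
rewrite EP EQ pow2E.
have Hmax i : exists j, [forall k, A i k <= A i j].
  case: (arg_maxP (A i) (i0 := i) (P := xpredT)) => // j _ H.
  by exists j; apply/forallP => k; apply: H.
pose M i := A i (xchoose (Hmax i)).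
have HM i k : A i k <= M i by move: (xchooseP (Hmax i)) => /forallP; apply.
apply: (le_trans (lemA A0' HM)).
have -> : 2 ^+ n = \prod_(i < n) 2 :> R by rewrite prodr_const card_ord.
rewrite -big_split /=.
apply: ler_prod => i _; apply/andP; split.
  rewrite Asum'; have := HM i i; have := A0' i i; lra.
rewrite Asum'; apply: (rowB (a := A i) (j := xchoose (Hmax i))) => // k; exact: HM.
Qed.
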